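(* The calculus $\lambda^a_{\parallel}$ terminates: if $\Gamma\vdash^a D:\alpha$ in $\lambda^a_{\parallel}$, then there is no infinite reduction sequence $D\to D_1\to D_2\to\cdots$.
   Context: Terms up to $\alpha$-renaming; substitution capture-avoiding. $\lambda^a_{\parallel}$: usages $u\in\{\infty,1,0\}$ with $\downarrow\infty=\infty$, $\downarrow1=0$, $\downarrow0$ undefined. Values $V::=*\mid\lambda y_1\ldots y_n.D$ ($n\ge1$); declarations $D::=\mathsf{let}_{u_1}x_1=V_1\,\mathsf{in}\cdots\mathsf{let}_{u_m}x_m=V_m\,\mathsf{in}\,M$ ($m\ge0$); terms $M::=x\mid@(M,M_1,\ldots,M_n)\mid(M\mid M)$ ($n\ge1$). Convention: applying $@$ or $\mid$ to declarations abbreviates the declaration obtained by moving all their let-prefixes (renamed apart) to the front. Evaluation contexts $E::=\mathsf{let}_u x=V\,\mathsf{in}\,[\,]\mid E[@(x_1,\ldots,x_k,[\,],M_1,\ldots,M_l)]\mid E[[\,]\mid M]\mid E[M\mid[\,]]$; for $E=\mathsf{let}(\ldots)^*\,\mathsf{in}\,E'$ with $E'$ not starting with a let, $E[\mathsf{let}(\ldots)^*\,\mathsf{in}\,M]$ moves the let-prefix of the plugged declaration in front (no capture). Structural congruence $\equiv$: least equivalence closed under $\alpha$-renaming and the operators with $\mathsf{let}_{u_1}x_1=V_1\,\mathsf{in}\,\mathsf{let}_{u_2}x_2=V_2\,\mathsf{in}\,D\equiv\mathsf{let}_{u_2}x_2=V_2\,\mathsf{in}\,\mathsf{let}_{u_1}x_1=V_1\,\mathsf{in}\,D$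 if $x_1\notin FV(V_2),x_2\notin FV(V_1)$, and $\mathsf{let}_u x=V\,\mathsf{in}\,D\equiv D$ if $x\notin FV(D)$. Reduction: least relation containing $E[\mathsf{let}_u x=\lambda y_1\ldots y_n.D\,\mathsf{in}\,E'[@(x,z_1,\ldots,z_n)]]\to E[\mathsf{let}_{\downarrow u}x=\lambda y_1\ldots y_n.D\,\mathsf{in}\,E'[[z_1/y_1,\ldots,z_n/y_n]D]]$ (only when $u\ne0$; $z_i$ variables), closed under $\equiv$. Value types $A::=\langle1\rangle\mid\langle A_1\to\cdots\to A_n\to\alpha\rangle$; types $\alpha::=A\mid b$ ($b$ the behavior type). Typing ($\Gamma$ maps variables to value types): $\Gamma\vdash^a x:A$ if $x:A\in\Gamma$; $\Gamma\vdash^a\mathsf{let}_\infty x=*\,\mathsf{in}\,D:\alpha$ if $\Gamma,x:\langle1\rangle\vdash^a D:\alpha$; $\Gamma\vdash^a\mathsf{let}_u x=\lambda y_1\ldots y_n.D'\,\mathsf{in}\,D:\alpha$ if $u\ne0$, $\Gamma,y_1:A_1,\ldots,y_n:A_n\vdash^a D':\alpha'$ and $\Gamma,x:\langle A_1\to\cdots\to A_n\to\alpha'\rangle\vdash^a D:\alpha$; $\Gamma\vdash^a\mathsf{let}_0x=V\,\mathsf{in}\,D:\alpha$ if $V\ne*$ and $\Gamma,x:\langle A^+\to\alpha'\rangle\vdash^a D:\alpha$ for some $A^+,\alpha'$; $\Gamma\vdash^a@(M,N_1,\ldots,N_n):\alpha$ if $\Gamma\vdash^a M:\langle A_1\to\cdots\to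 A_n\to\alpha\rangle$ and $\Gamma\vdash^a N_i:A_i$; $\Gamma\vdash^a(M_1\mid M_2):b$ if $\Gamma\vdash^a M_i:b$. *)

(* Defs.v *)
From Stdlib Require Import List Arith Relations.
Import ListNotations.

Inductive usage := UInf | U1 | U0.

(* down inf = inf, down 1 = 0; down 0 is undefined in the paper and is
   never used (the reduction rule requires u <> 0); we set it to 0. *)
Definition down (u : usage) : usage :=
  match u with UInf => UInf | U1 => U0 | U0 => U0 end.

(* Terms  M ::= x | @(M, M1, ..., Mn) (n >= 1) | (M | M).
   App f a args  represents  @(f, a, args...). *)
Inductive term :=
| Var (x : nat)
| App (f a : term) (args : list term)
| Par (m1 m2 : term).

(* Values V ::= * | \y1...yn. D  (n >= 1);  Lam y ys D  is  \y ys. D.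
   Declarations D ::= let_u x = V in D | M. *)
Inductive value :=
| Star
| Lam (y : nat) (ys : list nat) (body : decl)
with decl :=
| DBody (m : term)
| DLet (x : nat) (u : usage) (v : value) (d : decl).

Definition binding := (nat * usage * value)%type.

Fixpoint mk (bs : list binding) (m : term) : decl :=
  match bs with
  | [] => DBody m
  | (x, u, v) :: bs' => DLet x u v (mk bs' m)
  end.

Fixpoint prefix (d : decl) : list binding :=
  match d with DBody _ => [] | DLet x u v d' => (x, u, v) :: prefix d' end.

Fixpoint body (d : decl) : term :=
  match d with DBody m => m | DLet _ _ _ d' => body d' end.

Definition binders (bs : list binding) : list nat := map (fun b => fst (fst b)) bs.

Definition disjoint (l1 l2 : list nat) : Prop := forall v, In v l1 -> ~ In v l2.

Definition remove_all (l rm : list nat) : list nat :=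
  filter (fun v => negb (existsb (Nat.eqb v) rm)) l.

Fixpoint fv_term (m : term) : list nat :=
  match m with
  | Var x => [x]
  | App f a args => fv_term f ++ fv_term a ++ flat_map fv_term args
  | Par m1 m2 => fv_term m1 ++ fv_term m2
  end.

Fixpoint fv_value (v : value) : list nat :=
  match v with
  | Star => []
  | Lam y ys d => remove_all (fv_decl d) (y :: ys)
  end
with fv_decl (d : decl) : list nat :=
  match d with
  | DBody m => fv_term m
  | DLet x _ v d' => fv_value v ++ remove_all (fv_decl d') [x]
  end.

Fixpoint bv_value (v : value) : list nat :=
  match v with
  | Star => []
  | Lam y ys d => y :: ys ++ bv_decl d
  end
with bv_decl (d : decl) : list nat :=
  match d with
  | DBody _ => []
  | DLet x _ v d' => x :: bv_value v ++ bv_decl d'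
  end.

Definition sw (a b v : nat) : nat :=
  if v =? a then b else if v =? b then a else v.

Fixpoint swap_term (a b : nat) (m : term) : term :=
  match m with
  | Var x => Var (sw a b x)
  | App f c args => App (swap_term a b f) (swap_term a b c) (map (swap_term a b) args)
  | Par m1 m2 => Par (swap_term a b m1) (swap_term a b m2)
  end.

Fixpoint swap_value (a b : nat) (v : value) : value :=
  match v with
  | Star => Star
  | Lam y ys d => Lam (sw a b y) (map (sw a b) ys) (swap_decl a b d)
  end
with swap_decl (a b : nat) (d : decl) : decl :=
  match d with
  | DBody m => DBody (swap_term a b m)
  | DLet x u v d' => DLet (sw a b x) u (swap_value a b v) (swap_decl a b d')
  end.

(** * Substitution of variables for variables
    (naive, respecting shadowing; capture is excluded by side conditions
     in the reduction rule, which is closed under alpha-renaming). *)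
Fixpoint lookup (s : list (nat * nat)) (v : nat) : nat :=
  match s with
  | [] => v
  | (k, w) :: s' => if v =? k then w else lookup s' v
  end.

Definition drop (s : list (nat * nat)) (rm : list nat) : list (nat * nat) :=
  filter (fun p => negb (existsb (Nat.eqb (fst p)) rm)) s.

Fixpoint subst_term (s : list (nat * nat)) (m : term) : term :=
  match m with
  | Var x => Var (lookup s x)
  | App f a args => App (subst_term s f) (subst_term s a) (map (subst_term s) args)
  | Par m1 m2 => Par (subst_term s m1) (subst_term s m2)
  end.

Fixpoint subst_value (s : list (nat * nat)) (v : value) : value :=
  match v with
  | Star => Star
  | Lam y ys d => Lam y ys (subst_decl (drop s (y :: ys)) d)
  end
with subst_decl (s : list (nat * nat)) (d : decl) : decl :=
  match d with
  | DBody m => DBody (subst_term s m)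
  | DLet x u v d' => DLet x u (subst_value s v) (subst_decl (drop s [x]) d')
  end.

(* [z1/y1, ..., zn/yn]; if some y's coincide, the last one wins *)
Definition substitution (ys zs : list nat) : list (nat * nat) := rev (combine ys zs).

(** * Evaluation contexts (term part).  An evaluation context of the paper
    is a let-prefix followed by nested frames
    @(x1,...,xk,[],M1,...,Ml), [] | M, M | []. *)
Inductive ectx :=
| EHole
| EAppF (c : ectx) (a : term) (args : list term)
| EAppA (f : nat) (xs : list nat) (c : ectx) (args : list term)
| EParL (c : ectx) (m : term)
| EParR (m : term) (c : ectx).

Fixpoint plug (c : ectx) (m : term) : term :=
  match c with
  | EHole => m
  | EAppF c' a args => App (plug c' m) a args
  | EAppA f xs c' args =>
      match xs with
      | [] => App (Var f) (plug c' m) args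
      | x :: xs' => App (Var f) (Var x) (map Var xs' ++ plug c' m :: args)
      end
  | EParL c' m2 => Par (plug c' m) m2
  | EParR m1 c' => Par m1 (plug c' m)
  end.

Fixpoint fv_ectx (c : ectx) : list nat :=
  match c with
  | EHole => []
  | EAppF c' a args => fv_ectx c' ++ fv_term a ++ flat_map fv_term args
  | EAppA f xs c' args => f :: xs ++ fv_ectx c' ++ flat_map fv_term args
  | EParL c' m => fv_ectx c' ++ fv_term m
  | EParR m c' => fv_term m ++ fv_ectx c'
  end.

Inductive sc_vstep : value -> value -> Prop :=
| SC_alpha_lam : forall a b y ys d,
    ~ In a (fv_value (Lam y ys d)) -> ~ In b (fv_value (Lam y ys d)) ->
    sc_vstep (Lam y ys d) (swap_value a b (Lam y ys d))
| SC_lam_cong : forall y ys d d', sc_step d d' -> sc_vstep (Lam y ys d) (Lam y ys d')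
with sc_step : decl -> decl -> Prop :=
| SC_alpha_let : forall x x' u v d,
    (x' = x \/ ~ In x' (fv_decl d)) ->
    sc_step (DLet x u v d) (DLet x' u v (swap_decl x x' d))
| SC_comm : forall x1 u1 v1 x2 u2 v2 d,
    x1 <> x2 -> ~ In x1 (fv_value v2) -> ~ In x2 (fv_value v1) ->
    sc_step (DLet x1 u1 v1 (DLet x2 u2 v2 d)) (DLet x2 u2 v2 (DLet x1 u1 v1 d))
| SC_gc : forall x u v d, ~ In x (fv_decl d) -> sc_step (DLet x u v d) d
| SC_let_body : forall x u v d d', sc_step d d' -> sc_step (DLet x u v d) (DLet x u v d')
| SC_let_val : forall x u v v' d, sc_vstep v v' -> sc_step (DLet x u v d) (DLet x u v' d).

Definition sc : relation decl := clos_refl_sym_trans decl sc_step.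

(* The redex  E[let_u x = \y ys. B in E'[@(x, z, zs)]]  in flattened form:
   lets1 (from E), the binding of x, lets2 (from E'), and a term context c
   (the composition of the term parts of E and E').  Side conditions are the
   Barendregt-style no-capture conditions; since reduction is closed under
   structural congruence (which contains alpha-renaming) they are no loss. *)
Inductive red0 : decl -> decl -> Prop :=
| R_beta : forall (lets1 lets2 : list binding) x u y ys B c z zs,
    u <> U0 ->
    length zs = length ys ->
    ~ In x (binders lets2) ->
    disjoint (fv_value (Lam y ys B)) (x :: binders lets2) ->
    disjoint (bv_decl B) (z :: zs) ->
    disjoint (binders (prefix (subst_decl (substitution (y :: ys) (z :: zs)) B)))
             (fv_ectx c) ->
    red0 (mk (lets1 ++ (x, u, Lam y ys B) :: lets2)
             (plug c (App (Var x) (Var z) (map Var zs))))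
         (mk (lets1 ++ (x, down u, Lam y ys B) :: lets2
                ++ prefix (subst_decl (substitution (y :: ys) (z :: zs)) B))
             (plug c (body (subst_decl (substitution (y :: ys) (z :: zs)) B)))).

Definition red (d d' : decl) : Prop :=
  exists d1 d1', sc d d1 /\ red0 d1 d1' /\ sc d1' d'.

(* value types A ::= <1> | <A1 -> ... -> An -> alpha> (n >= 1);
   types alpha ::= A | b *)
Inductive vty :=
| VUnit
| VArr (A : vty) (As : list vty) (res : ty)
with ty :=
| TV (A : vty)
| TB.

Definition ctx := list (nat * vty).

Fixpoint lookupT (G : ctx) (x : nat) : option vty :=
  match G with
  | [] => None
  | (k, A) :: G' => if x =? k then Some A else lookupT G' x
  end.

(* G, y1:A1, ..., yn:An  (later bindings override earlier ones) *)
Definition extend_many (G : ctx) (ys : list nat) (As : list vty) : ctx :=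
  fold_left (fun g p => p :: g) (combine ys As) G.

Inductive has_type_term : ctx -> term -> ty -> Prop :=
| T_Var : forall G x A, lookupT G x = Some A -> has_type_term G (Var x) (TV A)
| T_App : forall G M N Ns A As al,
    has_type_term G M (TV (VArr A As al)) ->
    has_type_term G N (TV A) ->
    Forall2 (fun Ni Ai => has_type_term G Ni (TV Ai)) Ns As ->
    has_type_term G (App M N Ns) al
| T_Par : forall G M1 M2,
    has_type_term G M1 TB -> has_type_term G M2 TB -> has_type_term G (Par M1 M2) TB.

Inductive has_type : ctx -> decl -> ty -> Prop :=
| T_Body : forall G M al, has_type_term G M al -> has_type G (DBody M) al
| T_LetStar : forall G x D al,
    has_type ((x, VUnit) :: G) D al -> has_type G (DLet x UInf Star D) al
| T_LetLam : forall G x u y ys D' D A As al' al,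
    u <> U0 ->
    length ys = length As ->
    has_type (extend_many G (y :: ys) (A :: As)) D' al' ->
    has_type ((x, VArr A As al') :: G) D al ->
    has_type G (DLet x u (Lam y ys D') D) al
| T_LetZero : forall G x V D A As al' al,
    V <> Star ->
    has_type ((x, VArr A As al') :: G) D al ->
    has_type G (DLet x U0 V D) al.

(* Main.v *)
Require Import Defs.
From Stdlib Require Import List Arith Lia Relations Eqdep ClassicalEpsilon.
Import ListNotations.

Fixpoint tupleT (l : list Type) : Type :=
  match l with [] => unit | T :: l' => (T * tupleT l')%type end.

Fixpoint semV (A : vty) : Type :=
  match A with
  | VUnit => unit
  | VArr A As r => semV A -> tupleT (map semV As) -> (nat * semT r)%type
  end
with semT (t : ty) : Type :=
  match t with TV A => semV A | TB => unit end.

Definition SV := {A : vty & semV A}.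
Definition PV := {t : ty & semT t}.
Definition env := list (nat * option SV).

Fixpoint lookupE (r : env) (w : nat) : option SV :=
  match r with [] => None | (k, o) :: r' => if w =? k then o else lookupE r' w end.

Fixpoint ext (r : env) (ys : list nat) (As : list vty) {struct As} : tupleT (map semV As) -> env :=
  match As return tupleT (map semV As) -> env with
  | [] => fun _ => r
  | A :: As' => fun t => match ys with
                        | [] => r
                        | y :: ys' => ext ((y, Some (existT semV A (fst t))) :: r) ys' As' (snd t)
                        end
  end.

Inductive Ev : env -> term -> nat -> PV -> Prop :=
| Ev_Var r x s : lookupE r x = Some s -> Ev r (Var x) 0 (existT semT (TV (projT1 s)) (projT2 s))
| Ev_App r M N Ns cM cN cs A As rt f a args :
    Ev r M cM (existT semT (TV (VArr A As rt)) f) ->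
    Ev r N cN (existT semT (TV A) a) ->
    EvL r Ns cs As args ->
    Ev r (App M N Ns) (cM + cN + cs + S (fst (f a args))) (existT semT rt (snd (f a args)))
| Ev_Par r M1 M2 c1 c2 :
    Ev r M1 c1 (existT semT TB tt) -> Ev r M2 c2 (existT semT TB tt) ->
    Ev r (Par M1 M2) (c1 + c2) (existT semT TB tt)
with EvL : env -> list term -> nat -> forall As : list vty, tupleT (map semV As) -> Prop :=
| EvL_nil r : EvL r [] 0 [] tt
| EvL_cons r N Ns c cs A As a args :
    Ev r N c (existT semT (TV A) a) -> EvL r Ns cs As args ->
    EvL r (N :: Ns) (c + cs) (A :: As) (a, args).

Inductive EvD : env -> decl -> nat -> PV -> Prop :=
| E_Body r M n p : Ev r M n p -> EvD r (DBody M) n p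
| E_LetNone r x u v d n p : EvD ((x, None) :: r) d n p -> EvD r (DLet x u v d) n p
| E_LetU0 r x v d n p s : EvD ((x, Some s) :: r) d n p -> EvD r (DLet x U0 v d) n p
| E_LetStar r x u d n p :
    EvD ((x, Some (existT semV VUnit tt)) :: r) d n p -> EvD r (DLet x u Star d) n p
| E_LetLam r x u y ys B d n p A As rt (f : semV (VArr A As rt)) :
    length ys = length As ->
    (forall a args, EvD (ext r (y :: ys) (A :: As) (a, args)) B (fst (f a args))
                        (existT semT rt (snd (f a args)))) ->
    EvD ((x, Some (existT semV (VArr A As rt) f)) :: r) d n p ->
    EvD r (DLet x u (Lam y ys B) d) n p.
Section TI.
Variable Pt : term -> Prop.
Hypothesis HV : forall x, Pt (Var x).
Hypothesis HA : forall f a args, Pt f -> Pt a -> Forall Pt args -> Pt (App f a args).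
Hypothesis HP : forall m1 m2, Pt m1 -> Pt m2 -> Pt (Par m1 m2).
Fixpoint term_ind' (m : term) : Pt m :=
  match m with
  | Var x => HV x
  | App f a args => HA f a args (term_ind' f) (term_ind' a)
      ((fix F (l : list term) : Forall Pt l :=
          match l with [] => Forall_nil _ | t :: l' => Forall_cons _ (term_ind' t) (F l') end) args)
  | Par m1 m2 => HP m1 m2 (term_ind' m1) (term_ind' m2)
  end.
End TI.

Scheme value_mind := Induction for value Sort Prop
with decl_mind := Induction for decl Sort Prop.

Lemma sw_invol a b v : sw a b (sw a b v) = v.
Proof. unfold sw.
  destruct (Nat.eqb_spec v a); destruct (Nat.eqb_spec v b).
  all: repeat (match goal with |- context[?x =? ?y] => destruct (Nat.eqb_spec x y) end).
  all: lia.
Qed.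

Lemma sw_inj a b v w : sw a b v = sw a b w -> v = w.
Proof. intro H. rewrite <- (sw_invol a b v), <- (sw_invol a b w), H. reflexivity. Qed.

Lemma swap_term_invol a b m : swap_term a b (swap_term a b m) = m.
Proof.
  induction m using term_ind'; simpl; rewrite ?sw_invol; try congruence.
  rewrite IHm1, IHm2, map_map. f_equal. induction H; simpl; congruence.
Qed.

Lemma map_sw_invol a b l : map (sw a b) (map (sw a b) l) = l.
Proof. rewrite map_map. induction l; simpl; rewrite ?sw_invol; congruence. Qed.

Lemma swap_decl_invol a b : forall d, swap_decl a b (swap_decl a b d) = d.
Proof.
  apply (decl_mind (fun v => swap_value a b (swap_value a b v) = v)
                   (fun d => swap_decl a b (swap_decl a b d) = d)); simpl; intros;
  rewrite ?sw_invol, ?map_sw_invol, ?swap_term_invol; congruence.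
Qed.

Lemma swap_value_invol a b v : swap_value a b (swap_value a b v) = v.
Proof.
  apply (value_mind (fun v => swap_value a b (swap_value a b v) = v)
                   (fun d => swap_decl a b (swap_decl a b d) = d)); simpl; intros;
  rewrite ?sw_invol, ?map_sw_invol, ?swap_term_invol; congruence.
Qed.

Definition swapE (a b : nat) (r : env) : env := map (fun p => (sw a b (fst p), snd p)) r.

Lemma swapE_invol a b r : swapE a b (swapE a b r) = r.
Proof. induction r as [|[k o] r]; simpl; auto. rewrite sw_invol. simpl. rewrite IHr; reflexivity. Qed.

Lemma lookupE_swapE a b r w : lookupE (swapE a b r) (sw a b w) = lookupE r w.
Proof.
  induction r as [|[k o] r]; simpl; auto.
  destruct (Nat.eqb_spec (sw a b w) (sw a b k)), (Nat.eqb_spec w k); subst; auto.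
  - apply sw_inj in e; contradiction.
  - contradiction.
Qed.

Lemma lookupE_swapE' a b r w : lookupE (swapE a b r) w = lookupE r (sw a b w).
Proof. rewrite <- (sw_invol a b w) at 1. apply lookupE_swapE. Qed.

Lemma swapE_ext a b : forall As ys r t,
  swapE a b (ext r ys As t) = ext (swapE a b r) (map (sw a b) ys) As t.
Proof.
  induction As; intros ys r t; simpl; auto.
  destruct ys; simpl; auto.
Qed.

Lemma ext_notin : forall As ys r t w, ~ In w ys -> lookupE (ext r ys As t) w = lookupE r w.
Proof.
  induction As; intros ys r t w H; simpl; auto.
  destruct ys; simpl; auto. rewrite IHAs by (simpl in H; tauto). simpl.
  destruct (Nat.eqb_spec w n); subst; simpl in H; tauto.
Qed.

Lemma ext_agree : forall As ys r r' t w, length ys = length As ->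
  (~ In w ys -> lookupE r w = lookupE r' w) ->
  lookupE (ext r ys As t) w = lookupE (ext r' ys As t) w.
Proof.
  induction As; intros ys r r' t w Hl H; destruct ys; simpl in *; try discriminate; auto.
  apply IHAs; [lia|]. intro Hn. simpl. destruct (Nat.eqb_spec w n); auto.
  apply H. intros [E|E]; [congruence|contradiction].
Qed.
Scheme Ev_mind := Induction for Ev Sort Prop with EvL_mind := Induction for EvL Sort Prop.

Lemma in_remove_all w l rm : In w (remove_all l rm) <-> In w l /\ ~ In w rm.
Proof.
  unfold remove_all. rewrite filter_In. split; intros [H1 H2]; split; auto.
  - intro Hi. apply Bool.negb_true_iff in H2. assert (existsb (Nat.eqb w) rm = true).
    { apply existsb_exists. exists w; split; auto. apply Nat.eqb_refl. } congruence.
  - apply Bool.negb_true_iff. destruct (existsb (Nat.eqb w) rm) eqn:E; auto.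
    apply existsb_exists in E. destruct E as [z [Hz Ez]]. apply Nat.eqb_eq in Ez; subst. contradiction.
Qed.

Lemma lookup_drop s rm w : lookup (drop s rm) w = if existsb (Nat.eqb w) rm then w else lookup s w.
Proof.
  induction s as [|[k v] s]; simpl.
  - destruct (existsb (Nat.eqb w) rm); auto.
  - destruct (existsb (Nat.eqb k) rm) eqn:Ek; simpl.
    + rewrite IHs. destruct (Nat.eqb_spec w k); subst; [rewrite Ek|]; auto.
    + rewrite IHs. destruct (Nat.eqb_spec w k); subst; [rewrite Ek|]; auto.
Qed.

Lemma existsb_in w l : existsb (Nat.eqb w) l = true <-> In w l.
Proof.
  rewrite existsb_exists. split.
  - intros [z [Hz E]]. apply Nat.eqb_eq in E. subst; auto.
  - intros H. exists w. split; auto. apply Nat.eqb_refl.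
Qed.

Definition rangeOK (s : list (nat * nat)) (l : list nat) :=
  forall w, lookup s w = w \/ ~ In (lookup s w) l.

Lemma rangeOK_drop s l l' rm : rangeOK s l -> incl l' l -> rangeOK (drop s rm) l'.
Proof.
  intros H Hi w. rewrite lookup_drop. destruct (existsb (Nat.eqb w) rm); auto.
  destruct (H w); auto.
Qed.

Lemma agree_bind s (bs : list nat) (r r' r1 r1' : env) fvl l :
  (forall w, In w bs -> lookupE r1 w = lookupE r1' w) ->
  (forall w, ~ In w bs -> lookupE r1 w = lookupE r w) ->
  (forall w, ~ In w bs -> lookupE r1' w = lookupE r' w) ->
  rangeOK s l -> incl bs l ->
  (forall w, In w (remove_all fvl bs) -> lookupE r w = lookupE r' (lookup s w)) ->
  forall w, In w fvl -> lookupE r1 w = lookupE r1' (lookup (drop s bs) w).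
Proof.
  intros H1 H2 H3 Hr Hi H w Hw. rewrite lookup_drop.
  destruct (existsb (Nat.eqb w) bs) eqn:E.
  - apply existsb_in in E. auto.
  - assert (Hn : ~ In w bs) by (intro Hc; apply existsb_in in Hc; congruence).
    rewrite H2 by auto. rewrite H by (apply in_remove_all; auto).
    rewrite H3; auto. destruct (Hr w) as [Hq|Hq]; [rewrite Hq; auto|].
    intro Hc; apply Hq, Hi, Hc.
Qed.


Lemma Ev_subst : forall r M n p, Ev r M n p -> forall s r',
     (forall w, In w (fv_term M) -> lookupE r w = lookupE r' (lookup s w)) ->
     Ev r' (subst_term s M) n p.
Proof.
  apply (Ev_mind
    (fun r M n p _ => forall s r',
     (forall w, In w (fv_term M) -> lookupE r w = lookupE r' (lookup s w)) ->
     Ev r' (subst_term s M) n p)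
    (fun r Ns cs As args _ => forall s r',
     (forall w, In w (flat_map fv_term Ns) -> lookupE r w = lookupE r' (lookup s w)) ->
     EvL r' (map (subst_term s) Ns) cs As args)); simpl; intros.
  - constructor. rewrite <- H; auto.
  - econstructor; [apply H|apply H0|apply H1]; intros; apply H2; rewrite !in_app_iff; auto.
  - constructor; [apply H|apply H0]; intros; apply H1; rewrite !in_app_iff; auto.
  - constructor.
  - constructor; [apply H|apply H0]; intros; apply H1; rewrite !in_app_iff; auto.
Qed.

Lemma EvL_subst : forall r Ns cs As args, EvL r Ns cs As args -> forall s r',
     (forall w, In w (flat_map fv_term Ns) -> lookupE r w = lookupE r' (lookup s w)) ->
     EvL r' (map (subst_term s) Ns) cs As args.
Proof.
  induction 1; simpl; intros; constructor.
  - apply Ev_subst with r; auto. intros; apply H1; rewrite in_app_iff; auto.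
  - apply IHEvL; intros; apply H1; rewrite in_app_iff; auto.
Qed.

Lemma lookupE_cons_neq x o r w : w <> x -> lookupE ((x, o) :: r) w = lookupE r w.
Proof. intro H; simpl; destruct (Nat.eqb_spec w x); congruence. Qed.
Lemma lookupE_cons_eq x o r : lookupE ((x, o) :: r) x = o.
Proof. simpl; rewrite Nat.eqb_refl; auto. Qed.

Lemma agree_bind1 s x o r r' fvl l :
  rangeOK s l -> In x l ->
  (forall w, In w (remove_all fvl [x]) -> lookupE r w = lookupE r' (lookup s w)) ->
  forall w, In w fvl -> lookupE ((x, o) :: r) w = lookupE ((x, o) :: r') (lookup (drop s [x]) w).
Proof.
  intros Hr Hx H. apply agree_bind with (r := r) (r' := r') (l := l); auto.
  - intros w [<-|[]]; rewrite !lookupE_cons_eq; auto.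
  - intros w Hw; apply lookupE_cons_neq; intro; subst; apply Hw; left; auto.
  - intros w Hw; apply lookupE_cons_neq; intro; subst; apply Hw; left; auto.
  - intros z [<-|[]]; auto.
Qed.

Lemma EvD_subst : forall r d n p, EvD r d n p -> forall s r',
  rangeOK s (bv_decl d) ->
  (forall w, In w (fv_decl d) -> lookupE r w = lookupE r' (lookup s w)) ->
  EvD r' (subst_decl s d) n p.
Proof.
  induction 1; simpl; intros s0 r' Hr Ha.
  - constructor. apply Ev_subst with r; auto.
  - apply E_LetNone. apply IHEvD.
    + apply rangeOK_drop with (l := x :: bv_value v ++ bv_decl d); auto.
      intros z Hz; right; apply in_app_iff; auto.
    + apply agree_bind1 with (l := x :: bv_value v ++ bv_decl d); simpl; auto.
      intros; apply Ha; apply in_app_iff; auto.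
  - eapply E_LetU0. apply IHEvD.
    + apply rangeOK_drop with (l := x :: bv_value v ++ bv_decl d); auto.
      intros z Hz; right; apply in_app_iff; auto.
    + apply agree_bind1 with (l := x :: bv_value v ++ bv_decl d); simpl; auto.
      intros; apply Ha; apply in_app_iff; auto.
  - apply E_LetStar. apply IHEvD.
    + apply rangeOK_drop with (l := x :: bv_decl d); auto.
      intros z Hz; right; auto.
    + apply agree_bind1 with (l := x :: bv_decl d); simpl; auto.
  - eapply E_LetLam; [exact H| |].
    + intros a args. apply H1.
      * apply rangeOK_drop with (l := x :: (y :: ys ++ bv_decl B) ++ bv_decl d); auto.
        intros z Hz; right; apply in_app_iff; left; right; apply in_app_iff; auto.
      * apply agree_bind with (r := r) (r' := r') (l := x :: (y :: ys ++ bv_decl B) ++ bv_decl d); auto.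
        -- intros w Hw. apply ext_agree. simpl; congruence. intro Hc; contradiction.
        -- intros w Hw. apply ext_notin; auto.
        -- intros w Hw. apply ext_notin; auto.
        -- intros z Hz; right; apply in_app_iff; left; destruct Hz; [left; auto|right; apply in_app_iff; auto].
        -- intros; apply Ha; apply in_app_iff; auto.
    + apply IHEvD.
      * apply rangeOK_drop with (l := x :: (y :: ys ++ bv_decl B) ++ bv_decl d); auto.
        intros z Hz; right; apply in_app_iff; auto.
      * apply agree_bind1 with (l := x :: (y :: ys ++ bv_decl B) ++ bv_decl d); simpl; auto.
        intros; apply Ha; apply in_app_iff; auto.
Qed.

Lemma Ev_swap a b : forall r M n p, Ev r M n p -> Ev (swapE a b r) (swap_term a b M) n p.
Proof.
  apply (Ev_mind
    (fun r M n p _ => Ev (swapE a b r) (swap_term a b M) n p)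
    (fun r Ns cs As args _ => EvL (swapE a b r) (map (swap_term a b) Ns) cs As args));
  simpl; intros; try (econstructor; eauto; fail).
  constructor. rewrite lookupE_swapE; auto.
Qed.

Lemma EvD_swap a b : forall r d n p, EvD r d n p -> EvD (swapE a b r) (swap_decl a b d) n p.
Proof.
  induction 1; simpl.
  - constructor; apply Ev_swap; auto.
  - apply E_LetNone; exact IHEvD.
  - eapply E_LetU0; exact IHEvD.
  - apply E_LetStar; exact IHEvD.
  - eapply E_LetLam; [rewrite length_map; exact H| |exact IHEvD].
    intros a0 args. specialize (H1 a0 args). rewrite swapE_ext in H1. exact H1.
Qed.

Lemma subst_term_nil m : subst_term [] m = m.
Proof.
  induction m using term_ind'; simpl; auto; try congruence.
  rewrite IHm1, IHm2. f_equal. induction H; simpl; congruence.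
Qed.

Lemma subst_decl_nil : forall d, subst_decl [] d = d.
Proof.
  apply (decl_mind (fun v => subst_value [] v = v) (fun d => subst_decl [] d = d)); simpl; intros;
  rewrite ?subst_term_nil; congruence.
Qed.

Lemma Ev_agree r r' M n p : Ev r M n p ->
  (forall w, In w (fv_term M) -> lookupE r w = lookupE r' w) -> Ev r' M n p.
Proof. intros H Ha. rewrite <- (subst_term_nil M). apply Ev_subst with r; auto. Qed.

Lemma EvL_agree r r' Ns cs As args : EvL r Ns cs As args ->
  (forall w, In w (flat_map fv_term Ns) -> lookupE r w = lookupE r' w) -> EvL r' Ns cs As args.
Proof. intros H Ha. rewrite <- (map_id Ns). rewrite (map_ext id (subst_term [])) by (intro; rewrite subst_term_nil; auto).
  apply EvL_subst with r; auto. Qed.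

Lemma EvD_agree r r' d n p : EvD r d n p ->
  (forall w, In w (fv_decl d) -> lookupE r w = lookupE r' w) -> EvD r' d n p.
Proof. intros H Ha. rewrite <- (subst_decl_nil d). apply EvD_subst with r; auto. intro w; left; auto. Qed.

Definition VSem (r : env) (v : value) (s : SV) : Prop :=
  match v with
  | Star => s = existT semV VUnit tt
  | Lam y ys B => exists A As rt (f : semV (VArr A As rt)),
      s = existT semV (VArr A As rt) f /\ length ys = length As /\
      forall a args, EvD (ext r (y :: ys) (A :: As) (a, args)) B (fst (f a args))
                         (existT semT rt (snd (f a args)))
  end.

Definition OKb (r : env) (u : usage) (v : value) (o : option SV) : Prop :=
  match o with None => True | Some s => u = U0 \/ VSem r v s end.

Lemma let_iff r x u v d n p :
  EvD r (DLet x u v d) n p <-> exists o, OKb r u v o /\ EvD ((x, o) :: r) d n p.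
Proof.
  split.
  - intro H; inversion H; subst.
    + exists None; simpl; auto.
    + exists (Some s); simpl; auto.
    + exists (Some (existT semV VUnit tt)); simpl; auto.
    + eexists (Some _); split; [|eassumption]. simpl. right.
      exists A, As, rt, f; auto.
  - intros [[s|] [Hok He]].
    + destruct Hok as [Hu|Hv].
      * subst. eapply E_LetU0; eauto.
      * destruct v as [|y ys B]; simpl in Hv.
        -- subst. apply E_LetStar; auto.
        -- destruct Hv as (A & As & rt & f & -> & Hl & Hf). eapply E_LetLam; eauto.
    + apply E_LetNone; auto.
Qed.

Lemma VSem_swap a b r v s : VSem r v s -> VSem (swapE a b r) (swap_value a b v) s.
Proof.
  destruct v as [|y ys B]; simpl; auto.
  intros (A & As & rt & f & -> & Hl & Hf). exists A, As, rt, f; split; auto.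
  split; [rewrite length_map; auto|]. intros a0 args.
  pose proof (EvD_swap a b _ _ _ _ (Hf a0 args)) as H. rewrite swapE_ext in H. exact H.
Qed.

Lemma VSem_agree r r' v s : VSem r v s ->
  (forall w, In w (fv_value v) -> lookupE r w = lookupE r' w) -> VSem r' v s.
Proof.
  destruct v as [|y ys B]; [simpl; auto|]. cbn [VSem fv_value].
  intros (A & As & rt & f & -> & Hl & Hf) Ha. exists A, As, rt, f; split; auto. split; auto.
  intros a0 args. apply EvD_agree with (1 := Hf a0 args).
  intros w Hw. destruct (in_dec Nat.eq_dec w (y :: ys)).
  - apply (ext_agree (A :: As) (y :: ys)); [simpl; congruence | intro Hc; contradiction].
  - rewrite !ext_notin by auto. apply Ha, in_remove_all; auto.
Qed.

Lemma OKb_agree r r' u v o : OKb r u v o ->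
  (forall w, In w (fv_value v) -> lookupE r w = lookupE r' w) -> OKb r' u v o.
Proof. destruct o; simpl; auto. intros [H|H] Ha; auto. right; eapply VSem_agree; eauto. Qed.

Lemma sw_id a b w : w <> a -> w <> b -> sw a b w = w.
Proof. unfold sw; intros; destruct (Nat.eqb_spec w a), (Nat.eqb_spec w b); congruence. Qed.
Lemma sw_l a b : sw a b a = b.
Proof. unfold sw; rewrite Nat.eqb_refl; auto. Qed.
Lemma sw_r a b : sw a b b = a.
Proof. unfold sw; destruct (Nat.eqb_spec b a); subst; auto. rewrite Nat.eqb_refl; auto. Qed.

Scheme sc_step_mind := Induction for sc_step Sort Prop
with sc_vstep_mind := Induction for sc_vstep Sort Prop.

Lemma sc_step_iff : forall d d', sc_step d d' -> forall r n p, EvD r d n p <-> EvD r d' n p.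
Proof.
  apply (sc_step_mind
    (fun d d' _ => forall r n p, EvD r d n p <-> EvD r d' n p)
    (fun v v' _ => forall r s, VSem r v s <-> VSem r v' s)).
  -
    intros x x' u v d Hx r n p. rewrite !let_iff. split; intros [o [Hok He]]; exists o; split; auto.
    + apply EvD_agree with (r' := (x, o) :: swapE x x' r) in He.
      * apply EvD_swap with (a := x) (b := x') in He. simpl in He.
        rewrite sw_l, swapE_invol in He. exact He.
      * intros w Hw. simpl. destruct (Nat.eqb_spec w x); auto.
        rewrite lookupE_swapE', sw_id; auto. intro; subst. destruct Hx; auto.
    + apply EvD_swap with (a := x) (b := x') in He. simpl in He.
      rewrite sw_r, swap_decl_invol in He. apply EvD_agree with (1 := He).
      intros w Hw. simpl. destruct (Nat.eqb_spec w x); auto.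
      rewrite lookupE_swapE', sw_id; auto. intro; subst. destruct Hx; auto.
  -
    intros x1 u1 v1 x2 u2 v2 d H12 H1 H2 r n p. rewrite !let_iff.
    split; intros [o1 [Hok1 He1]]; rewrite let_iff in He1; destruct He1 as [o2 [Hok2 He2]];
      exists o2; split.
    + apply OKb_agree with (1 := Hok2). intros w Hw. simpl. destruct (Nat.eqb_spec w x1); subst; auto; contradiction.
    + rewrite let_iff. exists o1; split.
      * apply OKb_agree with (1 := Hok1). intros w Hw. simpl. destruct (Nat.eqb_spec w x2); subst; auto; contradiction.
      * apply EvD_agree with (1 := He2). intros w _. simpl.
        destruct (Nat.eqb_spec w x2), (Nat.eqb_spec w x1); subst; auto; contradiction.
    + apply OKb_agree with (1 := Hok2). intros w Hw. simpl. destruct (Nat.eqb_spec w x2); subst; auto; contradiction.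
    + rewrite let_iff. exists o1; split.
      * apply OKb_agree with (1 := Hok1). intros w Hw. simpl. destruct (Nat.eqb_spec w x1); subst; auto; contradiction.
      * apply EvD_agree with (1 := He2). intros w _. simpl.
        destruct (Nat.eqb_spec w x2), (Nat.eqb_spec w x1); subst; auto; contradiction.
  -
    intros x u v d Hx r n p. rewrite let_iff. split.
    + intros [o [_ He]]. apply EvD_agree with (1 := He). intros w Hw. simpl.
      destruct (Nat.eqb_spec w x); subst; auto; contradiction.
    + intro He. exists None; split; simpl; auto. apply EvD_agree with (1 := He). intros w Hw. simpl.
      destruct (Nat.eqb_spec w x); subst; auto; contradiction.
  -
    intros x u v d d' Hs IH r n p. rewrite !let_iff.
    split; intros [o [Hok He]]; exists o; split; auto; apply IH; auto.
  -
    intros x u v v' d Hs IH r n p. rewrite !let_iff.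
    split; intros [o [Hok He]]; exists o; split; auto; destruct o; simpl in *; auto;
      destruct Hok; auto; right; apply IH; auto.
  -
    intros a b y ys d Ha Hb r s. split; intro H.
    + apply VSem_agree with (r' := swapE a b r) in H.
      * apply VSem_swap with (a := a) (b := b) in H. rewrite swapE_invol in H. exact H.
      * intros w Hw. rewrite lookupE_swapE', sw_id; auto; intro; subst; auto.
    + apply VSem_swap with (a := a) (b := b) in H. rewrite swap_value_invol in H.
      apply VSem_agree with (1 := H). intros w Hw.
      rewrite lookupE_swapE', sw_id; auto; intro; subst; auto.
  -
    intros y ys d d' Hs IH r s. simpl. split; intros (A & As & rt & f & E & Hl & Hf);
      exists A, As, rt, f; repeat split; auto; intros; apply IH; auto.
Qed.

Lemma sc_pres r n p d d' : sc d d' -> EvD r d n p -> EvD r d' n p.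
Proof.
  intro H. revert n p. induction H; intros.
  - apply (sc_step_iff _ _ H); auto.
  - auto.
  -
    clear H. revert n p H0. induction y; auto.
Abort.

Lemma sc_iff d d' : sc d d' -> forall r n p, EvD r d n p <-> EvD r d' n p.
Proof.
  induction 1; intros.
  - apply sc_step_iff; auto.
  - tauto.
  - rewrite IHclos_refl_sym_trans; tauto.
  - rewrite IHclos_refl_sym_trans1; auto.
Qed.

Inductive EvP : env -> list binding -> env -> Prop :=
| EvP_nil r : EvP r [] r
| EvP_cons r x u v bs o r' : OKb r u v o -> EvP ((x, o) :: r) bs r' -> EvP r ((x, u, v) :: bs) r'.

Lemma mkE : forall bs r M n p, EvD r (mk bs M) n p <-> exists r', EvP r bs r' /\ Ev r' M n p.
Proof.
  induction bs as [|[[x u] v] bs IH]; intros; simpl.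
  - split.
    + intro H; inversion H; subst. exists r; split; auto; constructor.
    + intros [r' [H1 H2]]; inversion H1; subst; constructor; auto.
  - rewrite let_iff. split.
    + intros [o [Hok He]]. apply IH in He. destruct He as [r' [H1 H2]].
      exists r'; split; auto. econstructor; eauto.
    + intros [r' [H1 H2]]. inversion H1; subst. exists o; split; auto. apply IH; eauto.
Qed.

Lemma EvP_app : forall l1 l2 r r'', EvP r (l1 ++ l2) r'' <-> exists r', EvP r l1 r' /\ EvP r' l2 r''.
Proof.
  induction l1 as [|b l1 IH]; intros; simpl.
  - split; [intro; exists r; split; auto; constructor|].
    intros [r' [H1 H2]]; inversion H1; subst; auto.
  - split.
    + intro H; inversion H as [|r0 x u v bs o r0' Hok Hrest]; subst. apply IH in Hrest. destruct Hrest as [r' [H1 H2]].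
      exists r'; split; auto; econstructor; eauto.
    + intros [r' [H1 H2]]. inversion H1; subst. econstructor; eauto. apply IH; eauto.
Qed.

Lemma EvP_notin : forall bs r r' w, EvP r bs r' -> ~ In w (binders bs) -> lookupE r' w = lookupE r w.
Proof.
  induction 1; intros Hn; simpl in *; auto.
  rewrite IHEvP by tauto. simpl. destruct (Nat.eqb_spec w x); subst; auto. exfalso; auto.
Qed.

Lemma mk_prefix_body d : mk (prefix d) (body d) = d.
Proof. induction d; simpl; congruence. Qed.

Lemma Ev_var_inv r z c A a : Ev r (Var z) c (existT semT (TV A) a) ->
  c = 0 /\ lookupE r z = Some (existT semV A a).
Proof.
  intro H. remember (Var z) as M. remember (existT semT (TV A) a) as q.
  destruct H; try discriminate. injection HeqM as ->. split; auto. rewrite H.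
  destruct s as [B b]. simpl in *.
  pose proof (f_equal (@projT1 _ _) Heqq) as E. simpl in E. injection E as E. subst.
  apply Eqdep.EqdepTheory.inj_pair2 in Heqq. subst. auto.
Qed.

Lemma Ev_app_inv r M N Ns n p : Ev r (App M N Ns) n p ->
  exists cM cN cs A As rt (f : semV (VArr A As rt)) a args,
    Ev r M cM (existT semT (TV (VArr A As rt)) f) /\ Ev r N cN (existT semT (TV A) a) /\
    EvL r Ns cs As args /\ n = cM + cN + cs + S (fst (f a args)) /\
    p = existT semT rt (snd (f a args)).
Proof. intro H; inversion H; subst. do 9 eexists; eauto. Qed.

Lemma Ev_par_inv r M1 M2 n p : Ev r (Par M1 M2) n p ->
  exists c1 c2, Ev r M1 c1 (existT semT TB tt) /\ Ev r M2 c2 (existT semT TB tt) /\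
    n = c1 + c2 /\ p = existT semT TB tt.
Proof. intro H; inversion H; subst. do 2 eexists; eauto. Qed.

Lemma EvL_split : forall l1 N l2 r cs As t, EvL r (l1 ++ N :: l2) cs As t ->
  exists cN pN c0, cs = c0 + cN /\ Ev r N cN pN /\
    forall r' N' cN', (forall w, In w (flat_map fv_term l1 ++ flat_map fv_term l2) -> lookupE r w = lookupE r' w) ->
      Ev r' N' cN' pN -> EvL r' (l1 ++ N' :: l2) (c0 + cN') As t.
Proof.
  intros l1 N l2 r cs As t H. remember (l1 ++ N :: l2) as L. revert l1 HeqL.
  induction H; intros l1 HeqL.
  - destruct l1; discriminate.
  - destruct l1 as [|N1 l1]; simpl in HeqL; injection HeqL as E1 E2; subst.
    + exists c, (existT semT (TV A) a), cs. split; [lia|]. split; auto.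
      intros r' N' cN' Ha HN'. simpl. replace (cs + cN') with (cN' + cs) by lia.
      constructor; auto. apply EvL_agree with (1 := H0). intros; apply Ha; auto.
    + destruct (IHEvL l1 eq_refl) as (cN & pN & c0 & E & HN & K).
      exists cN, pN, (c + c0). split; [lia|]. split; auto.
      intros r' N' cN' Ha HN'. simpl. replace (c + c0 + cN') with (c + (c0 + cN')) by lia.
      constructor.
      * apply Ev_agree with (1 := H). intros; apply Ha; simpl; rewrite !in_app_iff; auto.
      * apply K; auto. intros w Hw; apply Ha; simpl; rewrite !in_app_iff in *; tauto.
Qed.

Lemma plug_split : forall c r R n p, Ev r (plug c R) n p ->
  exists nR pR m0, n = m0 + nR /\ Ev r R nR pR /\
    forall r' R' nR', (forall w, In w (fv_ectx c) -> lookupE r w = lookupE r' w) ->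
      Ev r' R' nR' pR -> Ev r' (plug c R') (m0 + nR') p.
Proof.
  induction c; intros r R n p H; simpl in *.
  - exists n, p, 0. split; auto.
  - apply Ev_app_inv in H. destruct H as (cM & cN & cs & A & As & rt & f & a0 & args0 & HM & HN & HL & -> & ->).
    destruct (IHc _ _ _ _ HM) as (nR & pR & m0 & E & HR & K).
    exists nR, pR, (m0 + cN + cs + S (fst (f a0 args0))). split; [lia|]. split; auto.
    intros r' R' nR' Ha HR'.
    replace (m0 + cN + cs + S (fst (f a0 args0)) + nR') with ((m0 + nR') + cN + cs + S (fst (f a0 args0))) by lia.
    econstructor.
    + apply K; auto. intros; apply Ha; rewrite !in_app_iff; auto.
    + apply Ev_agree with (1 := HN). intros; apply Ha; rewrite !in_app_iff; auto.
    + apply EvL_agree with (1 := HL). intros; apply Ha; rewrite !in_app_iff; auto.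
  - destruct xs as [|x xs].
    + apply Ev_app_inv in H. destruct H as (cM & cN & cs & A & As & rt & g & a0 & args0 & HM & HN & HL & -> & ->).
      destruct (IHc _ _ _ _ HN) as (nR & pR & m0 & E & HR & K).
      exists nR, pR, (cM + m0 + cs + S (fst (g a0 args0))). split; [lia|]. split; auto.
      intros r' R' nR' Ha HR'.
      replace (cM + m0 + cs + S (fst (g a0 args0)) + nR') with (cM + (m0 + nR') + cs + S (fst (g a0 args0))) by lia.
      econstructor.
      * apply Ev_agree with (1 := HM). intros w [<-|[]]; apply Ha; simpl; auto.
      * apply K; auto. intros; apply Ha; simpl; rewrite !in_app_iff; auto.
      * apply EvL_agree with (1 := HL). intros; apply Ha; simpl; rewrite !in_app_iff; auto.
    + apply Ev_app_inv in H. destruct H as (cM & cN & cs & A & As & rt & g & a0 & args0 & HM & HN & HL & -> & ->).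
      destruct (EvL_split _ _ _ _ _ _ _ HL) as (cP & pP & c0 & E & HP & KL).
      destruct (IHc _ _ _ _ HP) as (nR & pR & m0 & E2 & HR & K).
      exists nR, pR, (cM + cN + c0 + m0 + S (fst (g a0 args0))). split; [lia|]. split; auto.
      intros r' R' nR' Ha HR'.
      replace (cM + cN + c0 + m0 + S (fst (g a0 args0)) + nR') with (cM + cN + (c0 + (m0 + nR')) + S (fst (g a0 args0))) by lia.
      econstructor.
      * apply Ev_agree with (1 := HM). intros w [<-|[]]; apply Ha; simpl; auto.
      * apply Ev_agree with (1 := HN). intros w [<-|[]]; apply Ha; simpl; auto.
      * apply KL.
        -- intros w Hw; apply Ha; simpl. rewrite !in_app_iff in *. right. right.
           destruct Hw as [Hw|Hw]; [left|right; right]; auto.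
           clear -Hw. induction xs; simpl in *; auto. destruct Hw as [<-|Hw]; auto.
        -- apply K; auto. intros; apply Ha; simpl; rewrite !in_app_iff; auto.
  - apply Ev_par_inv in H. destruct H as (c1 & c2 & H1 & H2 & -> & ->).
    destruct (IHc _ _ _ _ H1) as (nR & pR & m0 & E & HR & K).
    exists nR, pR, (m0 + c2). split; [lia|]. split; auto.
    intros r' R' nR' Ha HR'. replace (m0 + c2 + nR') with ((m0 + nR') + c2) by lia.
    constructor.
    + apply K; auto. intros; apply Ha; rewrite !in_app_iff; auto.
    + apply Ev_agree with (1 := H2). intros; apply Ha; rewrite !in_app_iff; auto.
  - apply Ev_par_inv in H. destruct H as (c1 & c2 & H1 & H2 & -> & ->).
    destruct (IHc _ _ _ _ H2) as (nR & pR & m0 & E & HR & K).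
    exists nR, pR, (c1 + m0). split; [lia|]. split; auto.
    intros r' R' nR' Ha HR'. replace (c1 + m0 + nR') with (c1 + (m0 + nR')) by lia.
    constructor.
    + apply Ev_agree with (1 := H1). intros; apply Ha; rewrite !in_app_iff; auto.
    + apply K; auto. intros; apply Ha; rewrite !in_app_iff; auto.
Qed.

Lemma lookup_app l1 l2 w : lookup (l1 ++ l2) w =
  if existsb (Nat.eqb w) (map fst l1) then lookup l1 w else lookup l2 w.
Proof.
  induction l1 as [|[k v] l1]; simpl; auto.
  destruct (Nat.eqb_spec w k); simpl; auto.
Qed.

Lemma in_map_fst_combine w : forall (ys zs : list nat), length ys = length zs ->
  (In w (map fst (combine ys zs)) <-> In w (ys : list nat)).
Proof.
  induction ys; destruct zs; simpl; intros; try discriminate; try tauto.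
  rewrite IHys by lia. tauto.
Qed.

Lemma ext_subst : forall r2 Ns cs As args, EvL r2 Ns cs As args -> forall zs, Ns = map Var zs ->
  forall r1 ys, length ys = length zs -> cs = 0 /\
  forall w, lookupE (ext r1 ys As args) w =
    if existsb (Nat.eqb w) ys then lookupE r2 (lookup (rev (combine ys zs)) w) else lookupE r1 w.
Proof.
  induction 1 as [r2|r2 N Ns c cs A As a args H HL IHEvL]; intros zs Hz r1 ys Hl.
  - destruct zs; try discriminate. destruct ys; try discriminate. split; auto.
  - destruct zs as [|z zs]; try discriminate. simpl in Hz. injection Hz as -> ->.
    destruct ys as [|y ys]; try discriminate. simpl in Hl.
    apply Ev_var_inv in H. destruct H as [-> Hz].
    destruct (IHEvL zs eq_refl ((y, Some (existT semV A a)) :: r1) ys ltac:(lia)) as [-> K].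
    split; auto. intro w. simpl ext. rewrite K. simpl combine. simpl rev.
    rewrite lookup_app.
    assert (Ee : existsb (Nat.eqb w) (map fst (rev (combine ys zs))) = existsb (Nat.eqb w) ys).
    { apply Bool.eq_true_iff_eq. rewrite !existsb_in, map_rev, <- in_rev.
      apply in_map_fst_combine; lia. }
    rewrite Ee. simpl existsb.
    destruct (existsb (Nat.eqb w) ys) eqn:Ey; [rewrite Bool.orb_true_r; auto|].
    rewrite Bool.orb_false_r. simpl. destruct (Nat.eqb_spec w y); subst; auto.
Qed.

Lemma lookup_range l w : lookup l w = w \/ exists k, In (k, lookup l w) l.
Proof.
  induction l as [|[k v] l]; simpl; auto.
  destruct (Nat.eqb_spec w k); subst; eauto.
  destruct IHl as [E|[k' E]]; eauto.
Qed.

Lemma lookup_notdom l w : ~ In w (map fst l) -> lookup l w = w.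
Proof.
  induction l as [|[k v] l]; simpl; auto. intro H.
  destruct (Nat.eqb_spec w k); subst; [exfalso; auto|]. apply IHl; tauto.
Qed.

Lemma red0_dec d d' r n p : red0 d d' -> EvD r d n p -> exists n', n' < n /\ EvD r d' n' p.
Proof.
  intros Hred H. destruct Hred as [lets1 lets2 x u y ys B c z zs Hu Hlen Hx Hdfv Hbv Hbind].
  set (sg := substitution (y :: ys) (z :: zs)) in *.
  set (B' := subst_decl sg B) in *.
  apply mkE in H. destruct H as (r3 & HP & HE).
  apply EvP_app in HP. destruct HP as (r1 & HP1 & HP2).
  inversion HP2 as [|r0 x0 u0 v0 bs o r0' Hok HP3]; subst.
  destruct (plug_split _ _ _ _ _ HE) as (nR & pR & m0 & En & HR & K).
  apply Ev_app_inv in HR.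
  destruct HR as (cM & cN & cs & A & As & rt & f & a & args & Hx3 & Hz3 & HL & -> & ->).
  apply Ev_var_inv in Hx3. destruct Hx3 as [-> Hx3].
  rewrite (EvP_notin _ _ _ _ HP3 Hx), lookupE_cons_eq in Hx3. subst o.
  destruct Hok as [Hu0|Hv]; [contradiction|].
  destruct Hv as (A' & As' & rt' & f' & E & Hl & Hf).
  pose proof (f_equal (@projT1 _ _) E) as E1. simpl in E1. injection E1 as <- <- <-.
  apply inj_pairT2 in E. subst f'.
  assert (HL' : EvL r3 (map Var (z :: zs)) (cN + cs) (A :: As) (a, args)) by (constructor; auto).
  destruct (ext_subst _ _ _ _ _ HL' (z :: zs) eq_refl r1 (y :: ys) ltac:(simpl; lia)) as [Ec Kx].
  pose proof (Hf a args) as HB.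
  apply EvD_subst with (s := sg) (r' := r3) in HB.
  2:{ intro w. destruct (lookup_range sg w) as [E2|[k E2]]; auto. right. intro Hin.
      unfold sg, substitution in E2. apply in_rev, in_combine_r in E2.
      apply (Hbv _ Hin E2). }
  2:{ intros w Hw. change (ext r1 (y :: ys) (A :: As) (a, args)) with (ext r1 (y :: ys) (A :: As) (a, args)).
      rewrite Kx. destruct (existsb (Nat.eqb w) (y :: ys)) eqn:Ew; auto.
      assert (Hn : ~ In w (y :: ys)) by (intro Hc; apply existsb_in in Hc; congruence).
      rewrite lookup_notdom.
      2:{ unfold sg, substitution. rewrite map_rev, <- in_rev, in_map_fst_combine; auto. simpl; lia. }
      assert (Hwf : In w (fv_value (Lam y ys B))) by (apply in_remove_all; auto).
      rewrite (EvP_notin _ _ _ _ HP3).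
      - rewrite lookupE_cons_neq; auto. intro; subst. apply (Hdfv _ Hwf); left; auto.
      - intro Hc. apply (Hdfv _ Hwf); right; auto. }
  fold B' in HB. rewrite <- (mk_prefix_body B') in HB. apply mkE in HB.
  destruct HB as (r4 & HP4 & HE4).
  exists (m0 + fst (f a args)). split; [lia|].
  apply mkE. exists r4. split.
  - apply EvP_app. exists r1. split; auto. apply EvP_cons with (o := Some (existT semV (VArr A As rt) f)).
    + simpl. right. exists A, As, rt, f. auto.
    + apply EvP_app. exists r3. split; auto.
  - apply K; auto. intros w Hw. symmetry. apply (EvP_notin _ _ _ _ HP4).
    intro Hc. apply (Hbind _ Hc Hw).
Qed.

Section HTI.
Variable Q : ctx -> term -> ty -> Prop.
Hypothesis QV : forall G x A, lookupT G x = Some A -> Q G (Var x) (TV A).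
Hypothesis QA : forall G M N Ns A As al,
    Q G M (TV (VArr A As al)) -> Q G N (TV A) ->
    Forall2 (fun Ni Ai => Q G Ni (TV Ai)) Ns As -> Q G (App M N Ns) al.
Hypothesis QP : forall G M1 M2, Q G M1 TB -> Q G M2 TB -> Q G (Par M1 M2) TB.
Fixpoint ht_ind2 G M t (H : has_type_term G M t) {struct H} : Q G M t :=
  match H in has_type_term G M t return Q G M t with
  | T_Var G x A e => QV G x A e
  | T_App G M N Ns A As al HM HN HNs =>
      QA G M N Ns A As al (ht_ind2 _ _ _ HM) (ht_ind2 _ _ _ HN)
        ((fix F Ns As (h : Forall2 (fun Ni Ai => has_type_term G Ni (TV Ai)) Ns As)
            : Forall2 (fun Ni Ai => Q G Ni (TV Ai)) Ns As :=
          match h in Forall2 _ Ns As return Forall2 (fun Ni Ai => Q G Ni (TV Ai)) Ns As with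
          | Forall2_nil _ => Forall2_nil _
          | Forall2_cons _ _ h1 h2 => Forall2_cons _ _ (ht_ind2 _ _ _ h1) (F _ _ h2)
          end) Ns As HNs)
  | T_Par G M1 M2 H1 H2 => QP G M1 M2 (ht_ind2 _ _ _ H1) (ht_ind2 _ _ _ H2)
  end.
End HTI.

Definition consistent (G : ctx) (r : env) :=
  forall x A, lookupT G x = Some A -> exists v, lookupE r x = Some (existT semV A v).

Lemma ht_term_ev : forall G M al, has_type_term G M al ->
  forall r, consistent G r -> exists n v, Ev r M n (existT semT al v).
Proof.
  intros G0 M0 al0 H0.
  apply (ht_ind2 (fun G M al => forall r, consistent G r -> exists n v, Ev r M n (existT semT al v))); auto.
  - intros G x A Hl r Hc. destruct (Hc x A Hl) as [v Hv]. exists 0, v.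
    apply (Ev_Var r x (existT semV A v) Hv).
  - intros G M N Ns A As al IHM IHN IHs r Hc.
    destruct (IHM r Hc) as (cM & f & HM). destruct (IHN r Hc) as (cN & a & HN).
    assert (HL : exists cs args, EvL r Ns cs As args).
    { clear -IHs Hc. induction IHs.
      - exists 0, tt. constructor.
      - destruct (H r Hc) as (c & a & Ha). destruct IHIHs as (cs & args & HL).
        exists (c + cs), (a, args). constructor; auto. }
    destruct HL as (cs & args & HL).
    eexists; exists (snd (f a args)). econstructor; eauto.
  - intros G M1 M2 IH1 IH2 r Hc. destruct (IH1 r Hc) as (c1 & [] & H1). destruct (IH2 r Hc) as (c2 & [] & H2).
    exists (c1 + c2), tt. constructor; auto.
Qed.

Fixpoint dflV (A : vty) : semV A :=
  match A return semV A with
  | VUnit => tt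
  | VArr A As r => fun _ _ => (0, dflT r)
  end
with dflT (t : ty) : semT t :=
  match t return semT t with TV A => dflV A | TB => tt end.

Lemma ext_consistent : forall ys As G r t, consistent G r -> length ys = length As ->
  consistent (extend_many G ys As) (ext r ys As t).
Proof.
  induction ys as [|y ys IH]; intros As G r t Hc Hl; destruct As as [|A As]; simpl in *; try discriminate; auto.
  apply (IH As ((y, A) :: G)); [|lia].
  intros x B Hx. simpl in Hx. simpl. destruct (Nat.eqb_spec x y); eauto.
  injection Hx as <-. eauto.
Qed.

Lemma ht_decl_ev : forall G D al, has_type G D al ->
  forall r, consistent G r -> exists n v, EvD r D n (existT semT al v).
Proof.
  induction 1; intros r Hc.
  - destruct (ht_term_ev _ _ _ H r Hc) as (n & v & Hv). exists n, v. constructor; auto.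
  - destruct (IHhas_type ((x, Some (existT semV VUnit tt)) :: r)) as (n & v & Hv).
    + intros z B Hz. simpl in *. destruct (Nat.eqb_spec z x); eauto. injection Hz as <-. eauto.
    + exists n, v. apply E_LetStar; auto.
  - assert (Hex : forall (a : semV A) (args : tupleT (map semV As)),
              exists q : nat * semT al', EvD (ext r (y :: ys) (A :: As) (a, args)) D' (fst q) (existT semT al' (snd q))).
    { intros a args. destruct (IHhas_type1 (ext r (y :: ys) (A :: As) (a, args))) as (n & v & Hv).
      - apply ext_consistent; simpl; auto.
      - exists (n, v); auto. }
    set (f := fun a args => proj1_sig (constructive_indefinite_description _ (Hex a args))).
    destruct (IHhas_type2 ((x, Some (existT semV (VArr A As al') f)) :: r)) as (n & v & Hv).
    + intros z B Hz. simpl in *. destruct (Nat.eqb_spec z x); eauto. injection Hz as <-. eauto.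
    + exists n, v. apply E_LetLam with (A := A) (As := As) (rt := al') (f := f); auto.
      intros a args. unfold f. destruct (constructive_indefinite_description _ (Hex a args)); simpl; auto.
  - destruct (IHhas_type ((x, Some (existT semV (VArr A As al') (dflV (VArr A As al')))) :: r)) as (n & v & Hv).
    + intros z B Hz. simpl in *. destruct (Nat.eqb_spec z x); eauto. injection Hz as <-. eauto.
    + exists n, v. eapply E_LetU0; eauto.
Qed.

Definition env0 (G : ctx) : env := map (fun q => (fst q, Some (existT semV (snd q) (dflV (snd q))))) G.

Lemma env0_consistent G : consistent G (env0 G).
Proof.
  induction G as [|[k A] G IH]; intros x B Hx; simpl in *; [discriminate|].
  destruct (Nat.eqb_spec x k); eauto. injection Hx as <-. eauto.
Qed.

Theorem corollary2 (G : ctx) (D : decl) (al : ty) :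
  has_type G D al ->
  ~ (exists f : nat -> decl, f 0 = D /\ forall n, red (f n) (f (S n))).
Proof.
  intros Ht [f [H0 Hs]].
  destruct (ht_decl_ev _ _ _ Ht (env0 G) (env0_consistent G)) as (n & v & He).
  rewrite <- H0 in He. revert He. generalize (existT semT al v) as p. generalize 0 as k.
  induction n as [n IH] using (well_founded_induction lt_wf). intros k p He.
  destruct (Hs k) as (d1 & d1' & Hsc1 & Hr & Hsc2).
  apply (sc_iff _ _ Hsc1) in He.
  destruct (red0_dec _ _ _ _ _ Hr He) as (n' & Hlt & He').
  apply (sc_iff _ _ Hsc2) in He'.
  exact (IH n' Hlt (S k) p He').
Qed.
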